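(* Let $f$ be a min-tradeoff function, let $\mathrm{rate}$ be a convex rate function, and let $\alpha\in(1,2)$. Then the optimisation $$\inf_{p\in\mathcal{Q}}\Big(\Delta(f,p)-(\alpha-1)V(f,p)-(\alpha-1)^2K_\alpha(f)\Big)$$ is a convex optimisation problem, i.e. $\mathcal{Q}$ is a convex set and the objective $p\mapsto \Delta(f,p)-(\alpha-1)V(f,p)-(\alpha-1)^2K_\alpha(f)$ is a convex function on $\mathcal{Q}$.
   Context: Fix finite alphabets $\mathcal{A},\mathcal{B},\mathcal{X}$ and a function $x:\mathcal{A}\times\mathcal{B}\to\mathcal{X}$; let $d_A=|\mathcal{A}|$. An EAT channel acting on a finite-dimensional system $R$ is a channel $\mathcal{M}(\rho)=\sum_{a,b}|a\rangle\langle a|_A\otimes|b\rangle\langle b|_B\otimes|x(a,b)\rangle\langle x(a,b)|_X\otimes\mathcal{M}^{ab}(\rho)$ with each $\mathcal{M}^{ab}$ completely positive, trace non-increasing, and $\sum_{ab}\mathcal{M}^{ab}$ trace preserving. $\mathcal{Q}$ is the set of distributions $q$ on $\mathcal{X}$ that arise as the distribution of the register $X$ of $\mathcal{M}(\omega_{RR'})$ for some EAT channel $\mathcal{M}$ on $R$ and state $\omega_{RR'}$ ($R'$ arbitrary finite-dimensional, untouched by $\mathcal{M}$); $\Gamma(q)$ is the set of such pairs achieving $q$. A rate function is a function $\mathrm{rate}:\mathcal{Q}\to\mathbb{R}$ with $\mathrm{rate}(q)\le\inf_{(\omega,\mathcal{M})\in\Gamma(q)}H(A|BR')_{\mathcal{M}(\omega)}$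 for all $q\in\mathcal{Q}$ (conditional von Neumann entropy); a min-tradeoff function $f$ is an affine rate function, extended affinely to all probability distributions on $\mathcal{X}$. Writing $\delta_x$ for the point distribution at $x$: $\Delta(f,p):=\mathrm{rate}(p)-f(p)$; $\mathrm{Var}_p(f):=\sum_x p(x)\big(f(\delta_x)-\sum_{y}p(y)f(\delta_y)\big)^2$; $V(f,p):=\frac{\ln 2}{2}\big(\log(1+2d_A^2)+\sqrt{2+\mathrm{Var}_p(f)}\big)^2$ ($\log$ is base 2); $\mathrm{Max}(f):=\max_{p}f(p)$ over all distributions $p$ on $\mathcal{X}$; $\mathrm{Min}_{\mathcal{Q}}(f):=\inf_{p\in\mathcal{Q}}f(p)$; and $K_\alpha(f):=\frac{1}{6(2-\alpha)^3\ln 2}2^{(\alpha-1)(\log d_A+\mathrm{Max}(f)-\mathrm{Min}_{\mathcal{Q}}(f))}\ln^3\big(2^{\log d_A+\mathrm{Max}(f)-\mathrm{Min}_{\mathcal{Q}}(f)}+e^2\big)$, a constant independent of $p$. *)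

(* Defs.v *)
From HB Require Import structures.
From mathcomp Require Import all_boot all_order all_algebra.
From mathcomp Require Import complex.
From mathcomp Require Import all_classical all_reals all_analysis.
From Stdlib Require Import ClassicalEpsilon.

Set Implicit Arguments.
Unset Strict Implicit.
Unset Printing Implicit Defensive.

Import Order.TTheory GRing.Theory Num.Theory.
Local Open Scope ring_scope.
Local Open Scope complex_scope.

Section EAT.

Variable R : realType.

(* Operators on a finite-dimensional Hilbert space C^I, I a finite index type *)
Definition Op (I : finType) := I -> I -> R[i].

Definition trace (I : finType) (rho : Op I) : R[i] := \sum_(i : I) rho i i.

Definition psd (I : finType) (rho : Op I) : Prop :=
  forall v : I -> R[i], 0 <= \sum_(i : I) \sum_(j : I) (v i)^* * rho i j * v j.

Definition density (I : finType) (rho : Op I) : Prop :=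
  psd rho /\ trace rho = 1.

Definition linear_map (I J : finType) (Phi : Op I -> Op J) : Prop :=
  forall (a : R[i]) (rho sigma : Op I),
    Phi (fun i i' => a * rho i i' + sigma i i') =
    (fun j j' => a * Phi rho j j' + Phi sigma j j').

(* Phi (x) id_K, applying Phi to the first tensor factor *)
Definition apply_first (I J K : finType) (Phi : Op I -> Op J) (rho : Op (I * K)%type)
  : Op (J * K)%type :=
  fun u v => Phi (fun i i' => rho (i, u.2) (i', v.2)) u.1 v.1.

Definition completely_positive (I J : finType) (Phi : Op I -> Op J) : Prop :=
  linear_map Phi /\
  forall (n : nat) (rho : Op (I * 'I_n)%type), psd rho -> psd (apply_first Phi rho).

Definition trace_nonincreasing (I J : finType) (Phi : Op I -> Op J) : Prop :=
  forall rho : Op I, psd rho -> trace (Phi rho) <= trace rho.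

Definition log2 (x : R) : R := ln x / ln 2.

Definition is_spectrum (I : finType) (rho : Op I) (lam : I -> R) : Prop :=
  exists U : Op I,
    (forall i j, \sum_(k : I) U i k * (U j k)^* = if i == j then 1 else 0) /\
    (forall i j, rho i j = \sum_(k : I) U i k * (lam k)%:C * (U j k)^*).

Definition spectrum (I : finType) (rho : Op I) : I -> R :=
  epsilon (inhabits (fun _ : I => 0)) (is_spectrum rho).

Definition vN_entropy (I : finType) (rho : Op I) : R :=
  - \sum_(i : I) spectrum rho i * log2 (spectrum rho i).

Definition distribution (X : finType) (p : X -> R) : Prop :=
  (forall x, 0 <= p x) /\ \sum_(x : X) p x = 1.

Definition mix (X : finType) (t : R) (p q : X -> R) : X -> R :=
  fun x => t * p x + (1 - t) * q x.

Definition point_distr (X : finType) (x : X) : X -> R :=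
  fun y => if y == x then 1 else 0.

Variables (A B X : finType) (xf : A -> B -> X) (dR : nat).

Definition EAT_channel (dO : nat) (M : A -> B -> Op 'I_dR -> Op 'I_dO) : Prop :=
  (forall a b, completely_positive (M a b) /\ trace_nonincreasing (M a b)) /\
  (forall rho : Op 'I_dR, \sum_(a : A) \sum_(b : B) trace (M a b rho) = trace rho).

(* the state M(omega_{RR'}) on registers A B X (output of M^{ab}) R' *)
Definition eat_output (dR' dO : nat) (M : A -> B -> Op 'I_dR -> Op 'I_dO)
  (omega : Op ('I_dR * 'I_dR')%type) : Op (((A * B) * X) * ('I_dO * 'I_dR'))%type :=
  fun u v =>
    if [&& u.1.1 == v.1.1, u.1.2 == xf u.1.1.1 u.1.1.2 & v.1.2 == xf v.1.1.1 v.1.1.2]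
    then apply_first (M u.1.1.1 u.1.1.2) omega u.2 v.2 else 0.

Definition distX (dR' dO : nat) (tau : Op (((A * B) * X) * ('I_dO * 'I_dR'))%type) (x : X)
  : R[i] :=
  \sum_(ab : (A * B)%type) \sum_(o : 'I_dO) \sum_(k : 'I_dR')
    tau ((ab, x), (o, k)) ((ab, x), (o, k)).

Definition marg_ABR' (dR' dO : nat) (tau : Op (((A * B) * X) * ('I_dO * 'I_dR'))%type)
  : Op ((A * B) * 'I_dR')%type :=
  fun u v => \sum_(x : X) \sum_(o : 'I_dO) tau ((u.1, x), (o, u.2)) ((v.1, x), (o, v.2)).

Definition marg_BR' (dR' : nat) (sigma : Op ((A * B) * 'I_dR')%type) : Op (B * 'I_dR')%type :=
  fun u v => \sum_(a : A) sigma ((a, u.1), u.2) ((a, v.1), v.2).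

Definition cond_entropy_A_BR' (dR' dO : nat)
  (tau : Op (((A * B) * X) * ('I_dO * 'I_dR'))%type) : R :=
  vN_entropy (marg_ABR' tau) - vN_entropy (marg_BR' (marg_ABR' tau)).

Definition in_Gamma (q : X -> R) (dR' dO : nat) (omega : Op ('I_dR * 'I_dR')%type)
  (M : A -> B -> Op 'I_dR -> Op 'I_dO) : Prop :=
  density omega /\ EAT_channel M /\
  forall x : X, (q x)%:C = distX (eat_output M omega) x.

Definition inQ (q : X -> R) : Prop :=
  exists (dR' dO : nat) (omega : Op ('I_dR * 'I_dR')%type)
         (M : A -> B -> Op 'I_dR -> Op 'I_dO), in_Gamma q omega M.

Definition is_rate_function (rate : (X -> R) -> R) : Prop :=
  forall q, inQ q ->
  forall (dR' dO : nat) (omega : Op ('I_dR * 'I_dR')%type)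
         (M : A -> B -> Op 'I_dR -> Op 'I_dO),
    in_Gamma q omega M -> rate q <= cond_entropy_A_BR' (eat_output M omega).

Definition affine_on_distributions (f : (X -> R) -> R) : Prop :=
  forall (p q : X -> R) (t : R), distribution p -> distribution q -> 0 <= t <= 1 ->
    f (mix t p q) = t * f p + (1 - t) * f q.

Definition min_tradeoff (f : (X -> R) -> R) : Prop :=
  is_rate_function f /\ affine_on_distributions f.

Definition convex_set_Q : Prop :=
  forall (p q : X -> R) (t : R), inQ p -> inQ q -> 0 <= t <= 1 -> inQ (mix t p q).

Definition convex_on_Q (g : (X -> R) -> R) : Prop :=
  forall (p q : X -> R) (t : R), inQ p -> inQ q -> 0 <= t <= 1 ->
    g (mix t p q) <= t * g p + (1 - t) * g q.

Definition dA : R := #|A|%:R.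

Definition Delta (rate f : (X -> R) -> R) (p : X -> R) : R := rate p - f p.

Definition Var (f : (X -> R) -> R) (p : X -> R) : R :=
  \sum_(x : X) p x * (f (point_distr x) - \sum_(y : X) p y * f (point_distr y)) ^+ 2.

Definition Vfun (f : (X -> R) -> R) (p : X -> R) : R :=
  ln 2 / 2 * (log2 (1 + 2 * dA ^+ 2) + Num.sqrt (2 + Var f p)) ^+ 2.

Definition Maxf (f : (X -> R) -> R) : R :=
  sup [set y | exists p, distribution p /\ y = f p].

Definition MinQ (f : (X -> R) -> R) : R :=
  inf [set y | exists p, inQ p /\ y = f p].

Definition Kalpha (alpha : R) (f : (X -> R) -> R) : R :=
  let D := log2 dA + Maxf f - MinQ f in
  (6 * (2 - alpha) ^+ 3 * ln 2)^-1 * (2 `^ ((alpha - 1) * D)) *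
  (ln (2 `^ D + expR 2)) ^+ 3.

Definition objective (rate f : (X -> R) -> R) (alpha : R) (p : X -> R) : R :=
  Delta rate f p - (alpha - 1) * Vfun f p - (alpha - 1) ^+ 2 * Kalpha alpha f.

End EAT.

(* Main.v *)
Set Warnings "-all".
Require Import Defs.
From HB Require Import structures.
From mathcomp Require Import all_boot all_order all_algebra.
From mathcomp Require Import complex.
From mathcomp Require Import all_classical all_reals all_analysis.
From mathcomp Require Import ring lra.
Import Order.TTheory GRing.Theory Num.Theory.
Local Open Scope ring_scope.
Local Open Scope complex_scope.

Lemma conc_aux (R : realFieldType) (k L t a b c : R) : 0 <= k -> 0 <= L -> 0 <= t <= 1 ->
  0 <= a -> 0 <= b -> 0 <= c ->
  t * a ^+ 2 + (1 - t) * b ^+ 2 <= c ^+ 2 ->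
  t * (k * (L + a) ^+ 2) + (1 - t) * (k * (L + b) ^+ 2) <= k * (L + c) ^+ 2.
Proof.
move=> k0 L0 /andP[t0 t1] a0 b0 c0 hs.
set u := t * a + (1 - t) * b.
have u0 : 0 <= u by rewrite /u; apply: addr_ge0; apply: mulr_ge0; rewrite ?subr_ge0.
have hu : u ^+ 2 <= c ^+ 2.
  apply: le_trans hs; rewrite -subr_ge0.
  have -> : t * a ^+ 2 + (1 - t) * b ^+ 2 - u ^+ 2 = t * (1 - t) * (a - b) ^+ 2.
    by rewrite /u; ring.
  by apply: mulr_ge0; [apply: mulr_ge0; rewrite ?subr_ge0 | apply: sqr_ge0].
have hc : u <= c by nra.
have : 0 <= k * (2 * L * (c - u) + (c ^+ 2 - (t * a ^+ 2 + (1 - t) * b ^+ 2))).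
  apply: mulr_ge0 => //; apply: addr_ge0; last by rewrite subr_ge0.
  by apply: mulr_ge0; [apply: mulr_ge0 | rewrite subr_ge0].
move=> h; rewrite -subr_ge0; apply: le_trans h _; rewrite le_eqVlt; apply/orP; left; apply/eqP.
rewrite /u; ring.
Qed.

Lemma sum_if_eq (V : zmodType) (I : finType) (i0 : I) (F : I -> V) :
  \sum_i (if i == i0 then F i else 0) = F i0.
Proof. by rewrite -big_mkcond big_pred1_eq. Qed.

Section Aux.
Variable R : realType.

Lemma psd_diag (I : finType) (rho : Op R I) (i0 : I) : psd rho -> 0 <= rho i0 i0.
Proof.
move=> /(_ (fun j => if j == i0 then 1 else 0)).
rewrite (eq_bigr (fun i => if i == i0 then rho i0 i0 else 0)) ?sum_if_eq //.
move=> i _; case: eqP => [->|_].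
  rewrite (eq_bigr (fun j => if j == i0 then rho i0 i0 else 0)) ?sum_if_eq //.
  move=> j _; case: eqP => [->|_]; rewrite ?eqxx ?mulr0 //.
  by rewrite rmorph1 mul1r mulr1.
by rewrite big1 // => j _; rewrite rmorph0 !mul0r.
Qed.

Lemma trace_ge0 (I : finType) (rho : Op R I) : psd rho -> 0 <= trace rho.
Proof. by move=> h; apply: sumr_ge0 => i _; apply: psd_diag. Qed.


Variables (A B X : finType) (xf : A -> B -> X) (dR : nat).

Definition cof (dR' dO : nat) (M : A -> B -> Op R 'I_dR -> Op R 'I_dO)
  (omega : Op R ('I_dR * 'I_dR')%type) (ab : A * B) : R[i] :=
  \sum_(o : 'I_dO) \sum_(k : 'I_dR') apply_first (M ab.1 ab.2) omega (o, k) (o, k).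
Arguments cof {dR' dO}.

Lemma distX_eq (dR' dO : nat) (M : A -> B -> Op R 'I_dR -> Op R 'I_dO)
  (omega : Op R ('I_dR * 'I_dR')%type) (x : X) :
  distX (eat_output xf M omega) x =
  \sum_(ab : A * B) (if x == xf ab.1 ab.2 then cof M omega ab else 0).
Proof.
apply: eq_bigr => ab _; rewrite /eat_output /= eqxx /=.
case: (x == xf ab.1 ab.2) => //=.
by rewrite big1 // => o _; rewrite big1.
Qed.

Lemma cof_props (q : X -> R) (dR' dO : nat) (M : A -> B -> Op R 'I_dR -> Op R 'I_dO)
  (omega : Op R ('I_dR * 'I_dR')%type) :
  in_Gamma xf q omega M ->
  (forall ab, 0 <= cof M omega ab) /\ \sum_ab cof M omega ab = 1.
Proof.
move=> [[psdo tro] [[hcp hsum] hq]].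
split.
  move=> ab; apply: sumr_ge0 => o _; apply: sumr_ge0 => k _.
  have [_ h] := (hcp ab.1 ab.2).1.
  exact: (@psd_diag _ _ (o, k) (h dR' omega psdo)).
rewrite /cof.
under eq_bigr => ab _ do rewrite exchange_big /=.
rewrite exchange_big /=.
rewrite -tro /trace.
rewrite [RHS](eq_bigr (fun u => omega (u.1, u.2) (u.1, u.2))); last by case.
rewrite -(pair_bigA _ (fun i k => omega (i, k) (i, k))) exchange_big /=.
apply: eq_bigr => k _.
rewrite -(pair_bigA _ (fun a b => \sum_o apply_first (M a b) omega (o, k) (o, k))) /=.
exact: (hsum (fun i i' => omega (i, k) (i', k))).
Qed.


Definition Qchar (p : X -> R) : Prop :=
  exists (dR' : nat) (omega : Op R ('I_dR * 'I_dR')%type) (c : A * B -> R[i]),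
    density omega /\ (forall ab, 0 <= c ab) /\ \sum_ab c ab = 1 /\
    forall x, (p x)%:C = \sum_(ab : A * B) (if x == xf ab.1 ab.2 then c ab else 0).

Lemma inQ_Qchar p : inQ xf dR p -> Qchar p.
Proof.
move=> [dR' [dO [omega [M hG]]]].
have [c0 c1] := cof_props _ _ _ _ _ hG.
exists dR', omega, (cof M omega); split; first exact: hG.1.
split=> //; split=> // x.
by rewrite hG.2.2 distX_eq.
Qed.

Lemma Qchar_distr p : Qchar p -> Defs.distribution p.
Proof.
move=> [dR' [omega [c [_ [c0 [c1 hp]]]]]]; split.
  move=> x; rewrite -ler0c hp; apply: sumr_ge0 => ab _; case: ifP => // _.
apply: complexI; rewrite rmorph_sum /=.
under eq_bigr do rewrite hp.
rewrite exchange_big /= rmorph1 -c1; apply: eq_bigr => ab _.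
exact: (@sum_if_eq _ _ (xf ab.1 ab.2) (fun _ => c ab)).
Qed.


Lemma Qchar_mix p q (t : R) : Qchar p -> Qchar q -> 0 <= t <= 1 ->
  inQ xf dR (Defs.mix t p q).
Proof.
move=> [dR' [omega [c [dens [c0 [c1 hp]]]]]] [_ [_ [c' [_ [c0' [c1' hq]]]]]] /andP[t0 t1].
pose P (ab : A * B) : R[i] := t%:C * c ab + (1 - t)%:C * c' ab.
have P0 ab : 0 <= P ab.
  by apply: addr_ge0; apply: mulr_ge0; rewrite ?ler0c ?subr_ge0.
have P1 : \sum_ab P ab = 1.
  rewrite big_split /= -!mulr_sumr c1 c1' !mulr1 -rmorphD /=.
  by rewrite addrC subrK rmorph1.
have Ple1 ab : P ab <= 1.
  rewrite -P1 (bigD1 ab) //= lerDl; apply: sumr_ge0 => ? _; exact: P0.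
pose M (a : A) (b : B) (rho : Op R 'I_dR) : Op R 'I_dR := fun i j => P (a, b) * rho i j.
exists dR', dR, omega, M; split; first exact: dens.
split; last first.
  move=> x; rewrite distX_eq.
  have hcof : forall ab, cof M omega ab = P ab.
    move=> [a b]; rewrite /cof /apply_first /M /=.
    rewrite -[RHS]mulr1 -dens.2 /trace.
    rewrite [X in _ * X](eq_bigr (fun u => omega (u.1, u.2) (u.1, u.2))); last by case.
    rewrite -(pair_bigA _ (fun i k => omega (i, k) (i, k))) mulr_sumr.
    by apply: eq_bigr => o _; rewrite mulr_sumr.
  under eq_bigr do rewrite hcof.
  rewrite /Defs.mix rmorphD !rmorphM /= hp hq !mulr_sumr -big_split /=.
  apply: eq_bigr => ab _; rewrite /P; case: ifP => _; rewrite ?mulr0 ?addr0 //.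
split.
  move=> a b; split.
    split.
      move=> z rho sigma; apply: funext => i; apply: funext => j; rewrite /M.
      by rewrite mulrDr mulrCA.
    move=> n rho hrho v.
    have -> : \sum_i \sum_j (v i)^* * apply_first (M a b) rho i j * v j =
        P (a, b) * \sum_i \sum_j (v i)^* * rho i j * v j.
      rewrite mulr_sumr; apply: eq_bigr => -[i k] _; rewrite mulr_sumr.
      apply: eq_bigr => -[j l] _; rewrite /apply_first /M /=.
      by rewrite mulrCA !mulrA.
    by apply: mulr_ge0; [exact: P0 | exact: hrho].
  move=> rho hrho; rewrite /trace /M -mulr_sumr.
  by apply: ler_piMl; [exact: trace_ge0 | exact: Ple1].
move=> rho; rewrite /trace /M.
under eq_bigr do under eq_bigr do rewrite -mulr_sumr.
rewrite -[RHS]mul1r -P1 (pair_bigA _ (fun a b => P (a, b) * \sum_i rho i i)) /= mulr_suml.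
by apply: eq_bigr => -[a b].
Qed.


Definition gg (f : (X -> R) -> R) (x : X) : R := f (@point_distr R X x).

Lemma Var_formula (f : (X -> R) -> R) (p : X -> R) : \sum_x p x = 1 ->
  Defs.Var f p = \sum_x p x * gg f x ^+ 2 - (\sum_x p x * gg f x) ^+ 2.
Proof.
move=> p1; rewrite /Defs.Var -/(gg f _).
set E := \sum_y p y * gg f y.
transitivity (\sum_x (p x * gg f x ^+ 2 - (2 * E) * (p x * gg f x) + E ^+ 2 * p x)).
  by apply: eq_bigr => x _; rewrite /gg; ring.
rewrite !big_split /= -!mulr_sumr sumrN -mulr_sumr p1 -/E; ring.
Qed.

Lemma Var_ge0 (f : (X -> R) -> R) (p : X -> R) : (forall x, 0 <= p x) ->
  0 <= Defs.Var f p.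
Proof. by move=> h; apply: sumr_ge0 => x _; apply: mulr_ge0 => //; apply: sqr_ge0. Qed.

Lemma Var_concave (f : (X -> R) -> R) (p q : X -> R) (t : R) :
  \sum_x p x = 1 -> \sum_x q x = 1 -> 0 <= t <= 1 ->
  t * Defs.Var f p + (1 - t) * Defs.Var f q <= Defs.Var f (Defs.mix t p q).
Proof.
move=> p1 q1 /andP[t0 t1].
have m1 : \sum_x Defs.mix t p q x = 1.
  by rewrite /Defs.mix big_split /= -!mulr_sumr p1 q1; ring.
rewrite !Var_formula // /Defs.mix.
have e1 : \sum_x (t * p x + (1 - t) * q x) * gg f x ^+ 2 =
  t * \sum_x p x * gg f x ^+ 2 + (1 - t) * \sum_x q x * gg f x ^+ 2.
  rewrite (eq_bigr (fun x => t * (p x * gg f x ^+ 2) + (1 - t) * (q x * gg f x ^+ 2))).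
    by rewrite big_split /= -!mulr_sumr.
  by move=> x _; ring.
have e2 : \sum_x (t * p x + (1 - t) * q x) * gg f x =
  t * \sum_x p x * gg f x + (1 - t) * \sum_x q x * gg f x.
  rewrite (eq_bigr (fun x => t * (p x * gg f x) + (1 - t) * (q x * gg f x))).
    by rewrite big_split /= -!mulr_sumr.
  by move=> x _; ring.
rewrite e1 e2.
set a := \sum_x p x * gg f x; set b := \sum_x q x * gg f x.
have : 0 <= t * (1 - t) * (a - b) ^+ 2.
  by apply: mulr_ge0; [apply: mulr_ge0; rewrite ?subr_ge0 | apply: sqr_ge0].
move=> h; rewrite -subr_ge0; apply: le_trans h _; rewrite le_eqVlt; apply/orP; left; apply/eqP; ring.
Qed.


Lemma Vfun_concave (f : (X -> R) -> R) (p q : X -> R) (t : R) :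
  Defs.distribution p -> Defs.distribution q -> 0 <= t <= 1 ->
  t * Vfun A f p + (1 - t) * Vfun A f q <= Vfun A f (Defs.mix t p q).
Proof.
move=> [p0 p1] [q0 q1] ht; rewrite /Vfun.
have ln2 : 0 <= ln (2 : R) by apply: ln_ge0; rewrite ler1n.
have m0 : forall x, 0 <= Defs.mix t p q x.
  case/andP: ht => t0 t1 x; rewrite /Defs.mix.
  by apply: addr_ge0; apply: mulr_ge0; rewrite ?subr_ge0.
apply: conc_aux => //; rewrite ?sqrtr_ge0 //.
- by apply: divr_ge0.
- apply: divr_ge0 => //; apply: ln_ge0; rewrite lerDl.
  by apply: mulr_ge0 => //; apply: sqr_ge0.
rewrite !sqr_sqrtr ?addr_ge0 ?Var_ge0 //.
have -> : t * (2 + Defs.Var f p) + (1 - t) * (2 + Defs.Var f q) =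
  2 + (t * Defs.Var f p + (1 - t) * Defs.Var f q) by ring.
by rewrite lerD2l; apply: Var_concave.
Qed.

End Aux.
Arguments inQ_Qchar {R A B X xf dR p}.
Arguments Qchar_distr {R A B X xf dR p}.
Arguments Qchar_mix {R A B X xf dR p q t}.
Arguments Vfun_concave {R A X} f {p q t}.

Theorem mainTheorem3 (R : realType) (A B X : finType) (xf : A -> B -> X) (dR : nat)
  (f rate : (X -> R) -> R) (alpha : R) :
  min_tradeoff xf dR f ->
  is_rate_function xf dR rate ->
  convex_on_Q xf dR rate ->
  1 < alpha < 2 ->
  convex_set_Q R xf dR /\ convex_on_Q xf dR (objective xf dR rate f alpha).
Proof.
move=> [_ haff] _ hconv /andP[a1 a2]; split.
  move=> p q t hp hq ht.
  by apply: Qchar_mix => //; apply: inQ_Qchar.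
move=> p q t hp hq ht.
have dp := Qchar_distr (inQ_Qchar hp).
have dq := Qchar_distr (inQ_Qchar hq).
have hr := hconv p q t hp hq ht.
have hf := haff p q t dp dq ht.
have hV := Vfun_concave f dp dq ht.
have hV' : (alpha - 1) * (t * Vfun A f p + (1 - t) * Vfun A f q) <=
           (alpha - 1) * Vfun A f (Defs.mix t p q).
  by apply: ler_wpM2l => //; rewrite subr_ge0 ltW.
rewrite /objective /Delta hf.
set K := Kalpha _ _ _ _.
move: hr hV'; set r1 := rate _; set r2 := rate p; set r3 := rate q.
set v1 := Vfun A f (Defs.mix t p q); set v2 := Vfun A f p; set v3 := Vfun A f q.
move=> hr hV'.
have -> : t * (r2 - f p - (alpha - 1) * v2 - (alpha - 1) ^+ 2 * K) +
  (1 - t) * (r3 - f q - (alpha - 1) * v3 - (alpha - 1) ^+ 2 * K) =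
  (t * r2 + (1 - t) * r3) - (t * f p + (1 - t) * f q)
   - (alpha - 1) * (t * v2 + (1 - t) * v3) - (alpha - 1) ^+ 2 * K by ring.
by rewrite lerD2r; apply: lerB => //; rewrite lerD2r.
Qed.
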